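(* Let $M(X,Y)$ be the set of multirelations $X\leftrightarrow\mathcal{P}Y$ and $U=X\times\mathcal{P}(Y)$. (1) $\sqsubseteq_\downarrow$ is a preorder on $M(X,Y)$; $\Cup$ and $\Cap$ are associative and commutative operations with units $1_\Cup$ and $1_\Cap$ respectively, each monotone in both arguments with respect to $\sqsubseteq_\downarrow$; and $\emptyset\sqsubseteq_\downarrow R\sqsubseteq_\downarrow U$ for all $R$. (2) The same holds for $\sqsubseteq_\uparrow$, with least element $U$ and greatest element $\emptyset$, i.e. $U\sqsubseteq_\uparrow R\sqsubseteq_\uparrow\emptyset$ for all $R$. (3) The same holds for $\sqsubseteq_\updownarrow$ (a preorder with respect to which $\Cup$ and $\Cap$ are monotone in both arguments). (4) Inner complementation $R\mapsto\widetilde{R}$ is a bijection interchanging $\Cup$ with $\Cap$ and $1_\Cup$ with $1_\Cap$, and for all $R,S$: $R\sqsubseteq_\downarrow S\iff\widetilde{S}\sqsubseteq_\uparrow\widetilde{R}$, $R\sqsubseteq_\uparrow S\iff\widetilde{S}\sqsubseteq_\downarrow\widetilde{R}$, and $R\sqsubseteq_\updownarrow S\iff\widetilde{S}\sqsubseteq_\updownarrow\widetilde{R}$. (5) Each of $\sqsubseteq_\downarrow,\sqsubseteq_\uparrow,\sqsubseteq_\updownarrow$ (denote it $\sqsubseteq$) is a precongruence for $\cup$, $(-)^{\uparrow}$, $(-)^{\downarrow}$ and $(-)^{\updownarrow}$: if $R\sqsubseteq S$ then $R\cup T\sqsubseteq S\cup T$, $T\cup R\sqsubseteq T\cup S$,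 $R^{\uparrow}\sqsubseteq S^{\uparrow}$, $R^{\downarrow}\sqsubseteq S^{\downarrow}$ and $R^{\updownarrow}\sqsubseteq S^{\updownarrow}$. (6) Peleg composition preserves $\sqsubseteq_\downarrow$, $\sqsubseteq_\uparrow$ and $\sqsubseteq_\updownarrow$ in its second argument: if $R\sqsubseteq S$ for $R,S:Y\leftrightarrow\mathcal{P}Z$, then $T\ast R\sqsubseteq T\ast S$ for every $T:X\leftrightarrow\mathcal{P}Y$.
   Context: $R\Cup S=\{(a,A\cup B)\mid (a,A)\in R,(a,B)\in S\}$, $R\Cap S=\{(a,A\cap B)\mid (a,A)\in R,(a,B)\in S\}$, $1_\Cup=\{(a,\emptyset)\mid a\in X\}$, $1_\Cap=\{(a,Y)\mid a\in X\}$, $\widetilde{R}=\{(a,Y\setminus A)\mid (a,A)\in R\}$. $R^{\uparrow}=\{(a,A)\mid\exists B.(a,B)\in R\wedge B\subseteq A\}$, $R^{\downarrow}=\{(a,A)\mid\exists B.(a,B)\in R\wedge A\subseteq B\}$, $R^{\updownarrow}=R^{\uparrow}\cap R^{\downarrow}$. Preorders: $R\sqsubseteq_\uparrow S\iff S\subseteq R^{\uparrow}$; $R\sqsubseteq_\downarrow S\iff R\subseteq S^{\downarrow}$; $R\sqsubseteq_\updownarrow S\iff R\sqsubseteq_\downarrow S\wedge R\sqsubseteq_\uparrow S$. Peleg composition of $T:X\leftrightarrow\mathcal{P}Y$ and $S:Y\leftrightarrow\mathcal{P}Z$: $T\ast S=\{(a,C)\mid\exists B.\ (a,B)\in T\wedge\exists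 f:Y\to\mathcal{P}Z.\ (\forall b\in B.(b,f(b))\in S)\wedge C=\bigcup_{b\in B}f(b)\}$. *)

(* Defs.v *)
(* Subsets of Y are predicates Y -> Prop; a multirelation
   X <-> P Y is a predicate on pairs (a, A), i.e. X -> (Y -> Prop) -> Prop.
   Equalities between sets / multirelations are Leibniz equalities of
   predicates (extensional under funext + propext, which are whitelisted). *)
Set Implicit Arguments.

Definition pset (Y : Type) := Y -> Prop.
Definition mrel (X Y : Type) := X -> pset Y -> Prop.

Section Ops.
Variables X Y Z : Type.

Definition set_union (A B : pset Y) : pset Y := fun y => A y \/ B y.
Definition set_inter (A B : pset Y) : pset Y := fun y => A y /\ B y.
Definition set_compl (A : pset Y) : pset Y := fun y => ~ A y.
Definition set_sub (A B : pset Y) : Prop := forall y, A y -> B y.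

Definition mcup (R S : mrel X Y) : mrel X Y :=
  fun a C => exists A B, R a A /\ S a B /\ C = set_union A B.
Definition mcap (R S : mrel X Y) : mrel X Y :=
  fun a C => exists A B, R a A /\ S a B /\ C = set_inter A B.
Definition one_cup : mrel X Y := fun a C => C = (fun _ : Y => False).
Definition one_cap : mrel X Y := fun a C => C = (fun _ : Y => True).
Definition icompl (R : mrel X Y) : mrel X Y :=
  fun a C => exists A, R a A /\ C = set_compl A.

Definition up (R : mrel X Y) : mrel X Y :=
  fun a A => exists B, R a B /\ set_sub B A.
Definition down (R : mrel X Y) : mrel X Y :=
  fun a A => exists B, R a B /\ set_sub A B.
Definition updown (R : mrel X Y) : mrel X Y :=
  fun a A => up R a A /\ down R a A.

Definition mrel_sub (R S : mrel X Y) : Prop := forall a A, R a A -> S a A.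
Definition mrel_union (R S : mrel X Y) : mrel X Y := fun a A => R a A \/ S a A.
Definition mrel_empty : mrel X Y := fun _ _ => False.
Definition mrel_full : mrel X Y := fun _ _ => True.

Definition le_up (R S : mrel X Y) : Prop := mrel_sub S (up R).
Definition le_down (R S : mrel X Y) : Prop := mrel_sub R (down S).
Definition le_updown (R S : mrel X Y) : Prop := le_down R S /\ le_up R S.

End Ops.

Definition peleg (X Y Z : Type) (T : mrel X Y) (S : mrel Y Z) : mrel X Z :=
  fun a C => exists B, T a B /\
    exists f : Y -> pset Z, (forall b, B b -> S b (f b)) /\
      C = (fun z => exists b, B b /\ f b z).

Definition is_preorder (T : Type) (le : T -> T -> Prop) : Prop :=
  (forall x, le x x) /\ (forall x y z, le x y -> le y z -> le x z).

Definition monotone2 (T : Type) (le : T -> T -> Prop) (op : T -> T -> T) : Prop :=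
  forall x x' y y', le x x' -> le y y' -> le (op x y) (op x' y').

Definition assoc_comm_unit (T : Type) (op : T -> T -> T) (e : T) : Prop :=
  (forall x y z, op x (op y z) = op (op x y) z) /\
  (forall x y, op x y = op y x) /\
  (forall x, op e x = x) /\ (forall x, op x e = x).

Definition ordered_structure (X Y : Type) (le : mrel X Y -> mrel X Y -> Prop) : Prop :=
  is_preorder le /\ monotone2 le (@mcup X Y) /\ monotone2 le (@mcap X Y).

Definition precongruence (X Y : Type) (le : mrel X Y -> mrel X Y -> Prop) : Prop :=
  forall R S T : mrel X Y, le R S ->
    le (mrel_union R T) (mrel_union S T) /\
    le (mrel_union T R) (mrel_union T S) /\
    le (up R) (up S) /\ le (down R) (down S) /\ le (updown R) (updown S).

(* Main.v *)
Require Import Defs.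
From Stdlib Require Import Classical ClassicalEpsilon FunctionalExtensionality PropExtensionality.

Lemma pext (Y : Type) (A B : pset Y) : (forall y, A y <-> B y) -> A = B.
Proof. intro H; apply functional_extensionality; intro y; apply propositional_extensionality; auto. Qed.

Lemma mext (X Y : Type) (R S : mrel X Y) : (forall a C, R a C <-> S a C) -> R = S.
Proof. intro H; apply functional_extensionality; intro a; apply functional_extensionality; intro C;
  apply propositional_extensionality; auto. Qed.

Ltac un := unfold le_updown, le_down, le_up, mrel_sub, up, down, updown, mcup, mcap,
  mrel_union, mrel_empty, mrel_full, set_sub, set_union, set_inter, set_compl,
  icompl, one_cup, one_cap in *.

Section S.
Variables X Y : Type.

Lemma down_pre : is_preorder (@le_down X Y).
Proof. split; un.
  - intros R a A HA; exists A; auto.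
  - intros R S T H1 H2 a A HA. destruct (H1 _ _ HA) as [B [HB s1]].
    destruct (H2 _ _ HB) as [C [HC s2]]. exists C; auto.
Qed.
Lemma up_pre : is_preorder (@le_up X Y).
Proof. split; un.
  - intros R a A HA; exists A; auto.
  - intros R S T H1 H2 a A HA. destruct (H2 _ _ HA) as [B [HB s1]].
    destruct (H1 _ _ HB) as [C [HC s2]]. exists C; auto.
Qed.

Lemma down_cup : monotone2 (@le_down X Y) (@mcup X Y).
Proof.
  unfold monotone2; un. intros R R' S S' H1 H2 a C [A [B [HA [HB ->]]]].
  destruct (H1 _ _ HA) as [A' [HA' sA]]. destruct (H2 _ _ HB) as [B' [HB' sB]].
  exists (set_union A' B'); un; split; [exists A', B'; auto | firstorder].
Qed.
Lemma down_cap : monotone2 (@le_down X Y) (@mcap X Y).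
Proof.
  unfold monotone2; un. intros R R' S S' H1 H2 a C [A [B [HA [HB ->]]]].
  destruct (H1 _ _ HA) as [A' [HA' sA]]. destruct (H2 _ _ HB) as [B' [HB' sB]].
  exists (set_inter A' B'); un; split; [exists A', B'; auto | firstorder].
Qed.
Lemma up_cup : monotone2 (@le_up X Y) (@mcup X Y).
Proof.
  unfold monotone2; un. intros R R' S S' H1 H2 a C [A [B [HA [HB ->]]]].
  destruct (H1 _ _ HA) as [A' [HA' sA]]. destruct (H2 _ _ HB) as [B' [HB' sB]].
  exists (set_union A' B'); un; split; [exists A', B'; auto | firstorder].
Qed.
Lemma up_cap : monotone2 (@le_up X Y) (@mcap X Y).
Proof.
  unfold monotone2; un. intros R R' S S' H1 H2 a C [A [B [HA [HB ->]]]].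
  destruct (H1 _ _ HA) as [A' [HA' sA]]. destruct (H2 _ _ HB) as [B' [HB' sB]].
  exists (set_inter A' B'); un; split; [exists A', B'; auto | firstorder].
Qed.

Lemma cup_acu : assoc_comm_unit (@mcup X Y) (@one_cup X Y).
Proof.
  repeat split; intros; apply mext; intros a C; un; split.
  - intros [A [B' [HA [[B [D [HB [HD ->]]]] ->]]]].
    exists (set_union A B), D; un; repeat split; [exists A, B; auto | auto | apply pext; firstorder].
  - intros [A' [D [[A [B [HA [HB ->]]]] [HD ->]]]].
    exists A, (set_union B D); un; repeat split; [auto | exists B, D; auto | apply pext; firstorder].
  - intros [A [B [HA [HB ->]]]]. exists B, A; repeat split; auto; apply pext; firstorder.
  - intros [A [B [HA [HB ->]]]]. exists B, A; repeat split; auto; apply pext; firstorder.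
  - intros [A [B [HA [HB ->]]]]. subst A. replace (fun y => False \/ B y) with B; auto.
    apply pext; firstorder.
  - intros H. exists (fun _ => False), C; repeat split; auto; apply pext; firstorder.
  - intros [A [B [HA [HB ->]]]]. subst B. replace (fun y => A y \/ False) with A; auto.
    apply pext; firstorder.
  - intros H. exists C, (fun _ => False); repeat split; auto; apply pext; firstorder.
Qed.

Lemma cap_acu : assoc_comm_unit (@mcap X Y) (@one_cap X Y).
Proof.
  repeat split; intros; apply mext; intros a C; un; split.
  - intros [A [B' [HA [[B [D [HB [HD ->]]]] ->]]]].
    exists (set_inter A B), D; un; repeat split; [exists A, B; auto | auto | apply pext; firstorder].
  - intros [A' [D [[A [B [HA [HB ->]]]] [HD ->]]]].
    exists A, (set_inter B D); un; repeat split; [auto | exists B, D; auto | apply pext; firstorder].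
  - intros [A [B [HA [HB ->]]]]. exists B, A; repeat split; auto; apply pext; firstorder.
  - intros [A [B [HA [HB ->]]]]. exists B, A; repeat split; auto; apply pext; firstorder.
  - intros [A [B [HA [HB ->]]]]. subst A. replace (fun y => True /\ B y) with B; auto.
    apply pext; firstorder.
  - intros H. exists (fun _ => True), C; repeat split; auto; apply pext; firstorder.
  - intros [A [B [HA [HB ->]]]]. subst B. replace (fun y => A y /\ True) with A; auto.
    apply pext; firstorder.
  - intros H. exists C, (fun _ => True); repeat split; auto; apply pext; firstorder.
Qed.

Lemma ccK (A : pset Y) : set_compl (set_compl A) = A.
Proof. apply pext; intro y; un; split; [apply NNPP | auto]. Qed.

Lemma icK (R : mrel X Y) : icompl (icompl R) = R.
Proof.
  apply mext; intros a C; unfold icompl; split.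
  - intros [A [[B [HB ->]] ->]]. rewrite ccK; auto.
  - intro H. exists (set_compl C); split; [exists C; auto | now rewrite ccK].
Qed.

Lemma compl_sub (A B : pset Y) : set_sub (set_compl A) (set_compl B) <-> set_sub B A.
Proof. un; split; intros H y; [intro HB; apply NNPP; intro HA; exact (H y HA HB) | firstorder]. Qed.

Lemma down_up_ic (R S : mrel X Y) : le_down R S <-> le_up (icompl S) (icompl R).
Proof.
  split.
  - unfold le_down, le_up, mrel_sub, up, down, icompl.
    intros H a C [A [HA ->]]. destruct (H _ _ HA) as [B [HB sB]].
    exists (set_compl B); split; [exists B; auto | now apply compl_sub].
  - unfold le_down, le_up, mrel_sub, up, down, icompl.
    intros H a A HA. destruct (H a (set_compl A)) as [C [[B [HB ->]] sC]]; [exists A; auto|].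
    exists B; split; auto. now apply compl_sub.
Qed.

Lemma up_down_ic (R S : mrel X Y) : le_up R S <-> le_down (icompl S) (icompl R).
Proof.
  rewrite down_up_ic, !icK. tauto.
Qed.

Lemma ic_inj (R S : mrel X Y) : icompl R = icompl S -> R = S.
Proof. intro H. rewrite <- (icK R), <- (icK S), H. auto. Qed.

Lemma ic_cup (R S : mrel X Y) : icompl (mcup R S) = mcap (icompl R) (icompl S).
Proof.
  apply mext; intros a C; unfold icompl, mcup, mcap; split.
  - intros [D [[A [B [HA [HB ->]]]] ->]].
    exists (set_compl A), (set_compl B); repeat split; [exists A; auto | exists B; auto |].
    apply pext; un; firstorder.
  - intros [A' [B' [[A [HA ->]] [[B [HB ->]] ->]]]].
    exists (set_union A B); split; [exists A, B; auto|]. apply pext; un; firstorder.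
Qed.

Lemma ic_cap (R S : mrel X Y) : icompl (mcap R S) = mcup (icompl R) (icompl S).
Proof.
  apply mext; intros a C; unfold icompl, mcup, mcap; split.
  - intros [D [[A [B [HA [HB ->]]]] ->]].
    exists (set_compl A), (set_compl B); repeat split; [exists A; auto | exists B; auto |].
    apply pext; un; intro y; split; [|firstorder]. intro H.
    destruct (classic (A y)); [right | left]; firstorder.
  - intros [A' [B' [[A [HA ->]] [[B [HB ->]] ->]]]].
    exists (set_inter A B); split; [exists A, B; auto|]. apply pext; un; intro y; split; [firstorder|].
    intro H. destruct (classic (A y)); [right | left]; firstorder.
Qed.

Lemma ic_one_cup : icompl (@one_cup X Y) = @one_cap X Y.
Proof.
  apply mext; intros a C; unfold icompl, one_cup, one_cap; split.
  - intros [A [-> ->]]. apply pext; un; firstorder.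
  - intros ->. exists (fun _ => False); split; auto. apply pext; un; firstorder.
Qed.
Lemma ic_one_cap : icompl (@one_cap X Y) = @one_cup X Y.
Proof. rewrite <- ic_one_cup, icK. auto. Qed.

Lemma pc_down : precongruence (@le_down X Y).
Proof.
  intros R S T H. un. repeat split.
  - intros a A [HA|HA]; [destruct (H _ _ HA) as [B [HB sB]]; exists B; auto | exists A; auto].
  - intros a A [HA|HA]; [exists A; auto | destruct (H _ _ HA) as [B [HB sB]]; exists B; auto].
  - intros a A [B [HB sB]]. destruct (H _ _ HB) as [B' [HB' sB']].
    exists (fun y => A y \/ B' y); split; [exists B'; split; auto; intros y Hy; right; auto | intros y Hy; left; auto].
  - intros a A [B [HB sB]]. destruct (H _ _ HB) as [B' [HB' sB']].
    exists B'; split; [exists B'; auto | auto].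
  - intros a A [[B1 [HB1 s1]] [B2 [HB2 s2]]]. destruct (H _ _ HB2) as [B' [HB' sB']].
    exists B'; split; [split; exists B'; split; auto; unfold set_sub; auto | unfold set_sub in *; auto].
Qed.

Lemma pc_up : precongruence (@le_up X Y).
Proof.
  intros R S T H. un. repeat split.
  - intros a A [HA|HA]; [destruct (H _ _ HA) as [B [HB sB]]; exists B; auto | exists A; auto].
  - intros a A [HA|HA]; [exists A; auto | destruct (H _ _ HA) as [B [HB sB]]; exists B; auto].
  - intros a A [B [HB sB]]. destruct (H _ _ HB) as [B' [HB' sB']].
    exists B'; split; [exists B'; auto | auto].
  - intros a A [B [HB sB]]. destruct (H _ _ HB) as [B' [HB' sB']].
    exists (fun y => A y /\ B' y); split; [exists B'; split; auto; intros y [_ Hy]; auto | firstorder].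
  - intros a A [[B1 [HB1 s1]] [B2 [HB2 s2]]]. destruct (H _ _ HB1) as [B' [HB' sB']].
    exists B'; split; [split; exists B'; split; auto; unfold set_sub; auto | unfold set_sub in *; auto].
Qed.

End S.

Lemma ud_pre X Y : is_preorder (@le_updown X Y).
Proof.
  destruct (down_pre X Y) as [r1 t1]. destruct (up_pre X Y) as [r2 t2].
  split; unfold le_updown; [intros; auto | intros x y z [] []; split; eauto].
Qed.

Lemma pc_ud X Y : precongruence (@le_updown X Y).
Proof.
  intros R S T [H1 H2]. unfold le_updown.
  destruct (pc_down X Y R S T H1) as [a1 [b1 [c1 [d1 e1]]]].
  destruct (pc_up X Y R S T H2) as [a2 [b2 [c2 [d2 e2]]]]. tauto.
Qed.

Lemma peleg_down X Y Z (T : mrel X Y) (R S : mrel Y Z) :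
  le_down R S -> le_down (peleg T R) (peleg T S).
Proof.
  unfold le_down, mrel_sub, down, peleg. intros H a C [B [HB [f [Hf ->]]]].
  set (inh := inhabits (fun _ : Z => False)).
  set (g := fun b => epsilon inh (fun D => S b D /\ set_sub (f b) D)).
  exists (fun z => exists b, B b /\ g b z). split.
  - exists B; split; auto. exists g; split; auto.
    intros b Hb. destruct (H _ _ (Hf b Hb)) as [D HD].
    exact (proj1 (epsilon_spec inh (fun D => S b D /\ set_sub (f b) D) (ex_intro _ D HD))).
  - intros z [b [Hb Hz]]. exists b; split; auto.
    destruct (H _ _ (Hf b Hb)) as [D HD].
    exact (proj2 (epsilon_spec inh (fun D => S b D /\ set_sub (f b) D) (ex_intro _ D HD)) z Hz).
Qed.

Lemma peleg_up X Y Z (T : mrel X Y) (R S : mrel Y Z) :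
  le_up R S -> le_up (peleg T R) (peleg T S).
Proof.
  unfold le_up, mrel_sub, up, peleg. intros H a C [B [HB [f [Hf ->]]]].
  set (inh := inhabits (fun _ : Z => False)).
  set (g := fun b => epsilon inh (fun D => R b D /\ set_sub D (f b))).
  exists (fun z => exists b, B b /\ g b z). split.
  - exists B; split; auto. exists g; split; auto.
    intros b Hb. destruct (H _ _ (Hf b Hb)) as [D HD].
    exact (proj1 (epsilon_spec inh (fun D => R b D /\ set_sub D (f b)) (ex_intro _ D HD))).
  - intros z [b [Hb Hz]]. exists b; split; auto.
    destruct (H _ _ (Hf b Hb)) as [D HD].
    exact (proj2 (epsilon_spec inh (fun D => R b D /\ set_sub D (f b)) (ex_intro _ D HD)) z Hz).
Qed.

Theorem proposition5p3 (X Y Z : Type) :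
  (* (1) *)
  (ordered_structure (@le_down X Y) /\
   assoc_comm_unit (@mcup X Y) (@one_cup X Y) /\
   assoc_comm_unit (@mcap X Y) (@one_cap X Y) /\
   (forall R : mrel X Y, le_down (@mrel_empty X Y) R /\ le_down R (@mrel_full X Y))) /\
  (* (2) *)
  (ordered_structure (@le_up X Y) /\
   (forall R : mrel X Y, le_up (@mrel_full X Y) R /\ le_up R (@mrel_empty X Y))) /\
  (* (3) *)
  ordered_structure (@le_updown X Y) /\
  (* (4) *)
  ((forall R S : mrel X Y, icompl R = icompl S -> R = S) /\
   (forall S : mrel X Y, exists R, icompl R = S) /\
   (forall R S : mrel X Y, icompl (mcup R S) = mcap (icompl R) (icompl S)) /\
   (forall R S : mrel X Y, icompl (mcap R S) = mcup (icompl R) (icompl S)) /\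
   icompl (@one_cup X Y) = @one_cap X Y /\
   icompl (@one_cap X Y) = @one_cup X Y /\
   (forall R S : mrel X Y,
      (le_down R S <-> le_up (icompl S) (icompl R)) /\
      (le_up R S <-> le_down (icompl S) (icompl R)) /\
      (le_updown R S <-> le_updown (icompl S) (icompl R)))) /\
  (* (5) *)
  (precongruence (@le_down X Y) /\ precongruence (@le_up X Y) /\
   precongruence (@le_updown X Y)) /\
  (* (6) *)
  (forall (T : mrel X Y) (R S : mrel Y Z),
     (le_down R S -> le_down (peleg T R) (peleg T S)) /\
     (le_up R S -> le_up (peleg T R) (peleg T S)) /\
     (le_updown R S -> le_updown (peleg T R) (peleg T S))).
Proof.
  split; [|split; [|split; [|split; [|split]]]].
  - split; [split; [apply down_pre | split; [apply down_cup | apply down_cap]] |].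
    split; [apply cup_acu | split; [apply cap_acu |]].
    intro R; un; split; [intros a A [] | intros a A _; exists A; auto].
  - split; [split; [apply up_pre | split; [apply up_cup | apply up_cap]] |].
    intro R; un; split; [intros a A HA; exists A; auto | intros a A []].
  - split; [apply ud_pre | split].
    + intros R R' S S' [a1 a2] [b1 b2]; split; [apply down_cup | apply up_cup]; auto.
    + intros R R' S S' [a1 a2] [b1 b2]; split; [apply down_cap | apply up_cap]; auto.
  - split; [apply ic_inj | split; [| split; [apply ic_cup | split; [apply ic_cap |
      split; [apply ic_one_cup | split; [apply ic_one_cap |]]]]]].
    + intro S; exists (icompl S); apply icK.
    + intros R S. split; [apply down_up_ic | split; [apply up_down_ic |]].
      unfold le_updown. pose proof (down_up_ic X Y R S); pose proof (up_down_ic X Y R S); tauto.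
  - split; [apply pc_down | split; [apply pc_up | apply pc_ud]].
  - intros T R S. split; [apply peleg_down | split; [apply peleg_up |]].
    intros [H1 H2]; split; [apply peleg_down | apply peleg_up]; auto.
Qed.
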